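(* For every $s\in\Sigma^n$, the arc $(s,R(s))$ is a valid arc of $B_n$ with respect to the depth assignment $d$.
   Context: Let $k\ge 2$, $\Sigma=\{0,\dots,k-1\}$ with arithmetic modulo $k$, $n\ge 1$, and $s=s[0]\cdots s[n-1]\in\Sigma^n$. The de Bruijn graph $B_n$ has node set $\Sigma^n$ and an arc $(s,t)$ iff $s[1]\cdots s[n-1]=t[0]\cdots t[n-2]$. For an integer $j$, $ICR_j(s)=s[1]\cdots s[n-1](s[0]+j)$. Let $\mathbf N$ be the set of cycles (orbits) of the permutation $ICR_1$ of $\Sigma^n$. Let $\mathbf G$ be the directed graph on $\mathbf N$ with an arc $(\mathcal U,\mathcal V)$ iff some $s\in\mathcal U$ has $ICR_0(s)\in\mathcal V$. Let $\mathbf T$ be a directed spanning tree of $\mathbf G$ rooted at $\mathcal R\in\mathbf N$ (arcs from parent to child), with parent map $parent$; the depth of a cycle is its distance from the root (root has depth $0$). For each $\mathcal U\ne\mathcal R$, a representative $rep(\mathcal U)$ is a fixed node $s\in\mathcal U$ with $ICR_0^{-1}(s)\in parent(\mathcal U)$ and $s[n-1]\equiv \text{depth}(\mathcal U)\pmod k$ (assumed to exist and fixed). $\mathrm{Reps}$ is the set of all representatives. Define $R(s)=ICR_0(s)$ if $ICR_0(s)\in\mathrm{Reps}$; $R(s)=ICR_2(s)$ if $ICR_1(s)\in\mathrm{Reps}$; $R(s)=ICR_1(s)$ otherwise. The depth assignment $d:\Sigma^n\to\Sigma$ is $d_s=p+1 \pmod k$, where $p$ is the depth in $\mathbf T$ of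 the cycle containing $s$. An arc $(s,t)$ of $B_n$ is valid if, with $b=s[0]$ and $c=t[n-1]$, either ($b+1=c$ and $d_s=d_t$) or ($b+1=d_t$ and $c=d_s$). *)

(* Defs.v *)
From mathcomp Require Import all_boot all_algebra.
Set Implicit Arguments. Unset Strict Implicit. Unset Printing Implicit Defensive.
Import GRing.Theory.
Local Open Scope ring_scope.

(* Alphabet Sigma = 'Z_k (integers mod k; faithful when 1 < k).
   Words of Sigma^n are n-tuples; s[i] is [ch s i]. *)
Definition word (k n : nat) : finType := (n.-tuple 'Z_k)%type.

Definition ch (k n : nat) (s : word k n) (i : nat) : 'Z_k := nth 0 (tval s) i.

Definition icr_seq (k j : nat) (s : seq 'Z_k) : seq 'Z_k :=
  if s is x :: t then rcons t (x + j%:R) else [::].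

Lemma icr_seq_size (k n j : nat) (s : word k n) : size (icr_seq j (tval s)) == n.
Proof.
case: s => [[|x t]] //= Hs; by rewrite size_rcons.
Qed.

Definition ICR (k n j : nat) (s : word k n) : word k n := Tuple (icr_seq_size j s).

Definition cyc (k n : nat) (s : word k n) : {set word k n} :=
  [set t | fconnect (@ICR k n 1) s t].
Definition cycles (k n : nat) : {set {set word k n}} := [set cyc s | s : word k n].

Definition Garc (k n : nat) (U V : {set word k n}) : bool :=
  [exists s in U, ICR 0 s \in V].

Definition Reps (k n : nat) (Rt : {set word k n}) (rep : {set word k n} -> word k n)
  : {set word k n} :=
  [set rep U | U in [set U in cycles k n | U != Rt]].

Definition Rsucc (k n : nat) (Rt : {set word k n}) (rep : {set word k n} -> word k n)
  (s : word k n) : word k n :=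
  if ICR 0 s \in Reps Rt rep then ICR 0 s
  else if ICR 1 s \in Reps Rt rep then ICR 2 s
  else ICR 1 s.

Definition dep (k n : nat) (depth : {set word k n} -> nat) (s : word k n) : 'Z_k :=
  (depth (cyc s)).+1%:R.

Definition Barc (k n : nat) (s t : word k n) : bool :=
  drop 1 (tval s) == take n.-1 (tval t).

Definition valid_arc (k n : nat) (depth : {set word k n} -> nat) (s t : word k n) : bool :=
  Barc s t &&
  (let b := ch s 0 in let c := ch t n.-1 in
   ((b + 1 == c) && (dep depth s == dep depth t)) ||
   ((b + 1 == dep depth t) && (c == dep depth s))).

(* Main.v *)
Require Import Defs.
From mathcomp Require Import all_boot all_algebra.
Import GRing.Theory.
Local Open Scope ring_scope.

Section H.
Set Implicit Arguments.
Variables (k n : nat).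
Implicit Types (s t : word k n).

Lemma ICR_inj j : injective (@ICR k n j).
Proof.
move=> [[|x a] Ha] [[|y b] Hb] /(congr1 val); rewrite /ICR /icr_seq /=;
  try by move=> /(congr1 size); rewrite ?size_rcons.
  - by move=> _; apply: val_inj.
move=> E.
have Exy : x + j%:R = y + j%:R := congr1 snd (rcons_inj E).
have Eab : a = b := congr1 fst (rcons_inj E).
apply: val_inj => /=.
have Exy' : x = y := @addIr 'Z_k (j%:R) x y Exy.
by rewrite Eab Exy'.
Qed.

Lemma cyc_self (s : word k n) : s \in cyc s.
Proof. by rewrite inE connect0. Qed.

Lemma cyc_ICR1 (s : word k n) : ICR 1 s \in cyc s.
Proof. by rewrite inE fconnect1. Qed.

Lemma cyc_eq (u x : word k n) : x \in cyc u -> cyc x = cyc u.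
Proof.
rewrite inE => H; apply/setP => y; rewrite !inE.
have Hs : connect_sym (frel (@ICR k n 1)) by move=> a b; apply: fconnect_sym; exact: ICR_inj.
by rewrite (same_connect Hs H).
Qed.

Lemma cycles_eq (U : {set word k n}) (x : word k n) : U \in cycles k n -> x \in U -> cyc x = U.
Proof. by case/imsetP => u _ -> /cyc_eq. Qed.

Lemma ch_ICR (hn : (0 < n)%N) j (s : word k n) : ch (ICR j s) n.-1 = ch s 0 + j%:R.
Proof.
case: s => [[|x a] Ha] /=; first by exfalso; move/eqP: Ha => HH; rewrite -HH in hn.
rewrite /ch /= nth_rcons; have -> : n.-1 = size a by move/eqP: Ha => <-.
by rewrite ltnn eqxx.
Qed.

Lemma Barc_ICR j (s : word k n) : Barc s (ICR j s).
Proof.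
case: s => [[|x a] Ha]; rewrite /Barc //=.
have -> : n.-1 = size a by move/eqP: Ha => <-.
rewrite /icr_seq -cats1 take_size_cat // ?drop0 ?eqxx.
done.
Qed.

Lemma ICR_shift (s t : word k n) : ICR 0 t = ICR 1 s -> ICR 1 t = ICR 2 s.
Proof.
case: s => [[|x a] Ha]; case: t => [[|y b] Hb] /(congr1 val) /= E; apply: val_inj => //=;
  try by move/(congr1 size): E; rewrite /icr_seq ?size_rcons.
rewrite /icr_seq in E *.
have E2 : y + 0%:R = x + 1%:R := congr1 snd (rcons_inj E).
have Eab : b = a := congr1 fst (rcons_inj E).
rewrite Eab; congr rcons.
by rewrite -(addr0 y) -[0]/(0%:R) E2 -addrA -natrD.
Qed.
End H.

Theorem lemma12 (k n : nat) (hk : (1 < k)%N) (hn : (0 < n)%N)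
  (Rt : {set word k n})
  (parent : {set word k n} -> {set word k n})
  (depth : {set word k n} -> nat)
  (rep : {set word k n} -> word k n)
  (HRt : Rt \in cycles k n)
  (Hpar : forall U, U \in cycles k n -> U != Rt ->
            parent U \in cycles k n /\ Garc (parent U) U)
  (Hreach : forall U, U \in cycles k n -> exists m, iter m parent U = Rt)
  (Hdepth0 : depth Rt = 0%N)
  (HdepthS : forall U, U \in cycles k n -> U != Rt ->
               depth U = (depth (parent U)).+1)
  (Hrep : forall U, U \in cycles k n -> U != Rt ->
            [/\ rep U \in U,
                exists2 t, t \in parent U & ICR 0 t = rep U
              & ch (rep U) n.-1 = (depth U)%:R]) :
  forall s : word k n, valid_arc depth s (Rsucc Rt rep s).
Proof.
move=> s; rewrite /Rsucc /valid_arc.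
case: ifP => [H0|_].
  rewrite Barc_ICR /=; apply/orP; right.
  case/imsetP: H0 => U; rewrite inE => /andP [HU HUR] E.
  case: (Hrep U HU HUR) => HrU [t' Ht' Et'] Hch.
  have st : t' = s by apply: (@ICR_inj _ _ 0); rewrite Et'.
  subst t'.
  have [HpU _] := Hpar U HU HUR.
  rewrite /dep (cycles_eq HpU Ht') E (cycles_eq HU HrU).
  move: Hch; rewrite -E ch_ICR // addr0 => ->.
  by rewrite HdepthS // -!natr1 !eqxx.
case: ifP => [H1|_].
  rewrite Barc_ICR /=; apply/orP; right.
  case/imsetP: H1 => U; rewrite inE => /andP [HU HUR] E.
  case: (Hrep U HU HUR) => HrU [t' Ht' Et'] Hch.
  have [HpU _] := Hpar U HU HUR.
  have Ht : ICR 2 s \in parent U.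
    rewrite -(ICR_shift (etrans Et' (esym E))).
    by rewrite -(cycles_eq HpU Ht') cyc_ICR1.
  have Hs : cyc s = U.
    rewrite -(cycles_eq HU HrU) -E; apply: esym; apply: cyc_eq; exact: cyc_ICR1.
  rewrite /dep (cycles_eq HpU Ht) Hs -HdepthS //.
  move: Hch; rewrite -E ch_ICR // => Hch.
  by rewrite ch_ICR // -[(depth U).+1]addn1 natrD -Hch -addrA -natrD !eqxx.
rewrite Barc_ICR /=; apply/orP; left.
rewrite ch_ICR // eqxx /= /dep.
by rewrite (cyc_eq (cyc_ICR1 s)).
Qed.
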